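(* The sub-set-operad of $\mathrm{RWS}$ generated by $A_\prec$ and $A_\succ$ consists exactly of the recursively labelled red and white trees in which every node has exactly one label (no empty nodes and no node with two or more labels).
   Context: Red and white trees: $\mathrm{RW}(n)$ is the set of finite rooted trees (children unordered) whose nodes $z$ carry possibly empty label sets $L(z)\subseteq[n]$ partitioning $[n]$, each empty node having at least two children; labelled nodes are white, an empty node is red iff all its children are white. Composition $T_1\circ_xT_2$ ($T_1\in\mathrm{RW}(m)$, $T_2\in\mathrm{RW}(n)$): relabel $T_1$ by $y\mapsto y+n-1$ for $y>x$ and $T_2$ by $y\mapsto y+x-1$; $z\ni x$ in $T_1$, $r$ = root of $T_2$. (W) $r$ not red: remove $x$ from $L(z)$, add $L(r)$ to $L(z)$, children of $r$ become children of $z$. (R1) $r$ red, $T_1$ the single node $\{x\}$: result $T_2$. (R2) $r$ red and ($z$ has a child or $|L(z)|\ge2$): remove $x$ from $L(z)$, attach $T_2$ as child subtree of $z$. (R3) $r$ red, $z$ non-root leaf with $L(z)=\{x\}$: delete $z$, children of $r$ become children of the parent of $z$. Colours recomputed. A tree is recursively labelled if for each node the union of label sets in its subtree is an interval of integers. $\mathrm{RWS}$ is the sub-set-operad generated by $A_\mu$ (single node $\{1,2\}$), $A_\prec$ (root $\{1\}$ with child $\{2\}$), $A_\succ$ (root $\{2\}$ with child $\{1\}$), $A_\odot$ (empty red root with children $\{1\},\{2\}$). *)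

(* Defs.v *)
From Stdlib Require Import List Permutation.
From mathcomp Require Import all_boot.
Set Implicit Arguments.
Unset Strict Implicit.
Unset Printing Implicit Defensive.

(* A rooted tree: a node carries a (finite, duplicate-free in well-formed
   trees) label set, represented as a list, and a list of children.  Children
   are unordered and label sets are sets: this is accounted for by the
   isomorphism relation [tiso] below. *)
Inductive tree : Type := Node of seq nat & seq tree.

Definition tlab (t : tree) : seq nat := let: Node L _ := t in L.
Definition tch (t : tree) : seq tree := let: Node _ cs := t in cs.

Fixpoint labels (t : tree) : seq nat :=
  let: Node L cs := t in L ++ flatten (map labels cs).

Fixpoint nodes (t : tree) : seq tree :=
  let: Node L cs := t in Node L cs :: flatten (map nodes cs).

Inductive tiso : tree -> tree -> Prop :=
| tiso_node L1 L2 cs1 cs2 cs :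
    perm_eq L1 L2 -> Permutation cs2 cs -> Forall2 tiso cs1 cs ->
    tiso (Node L1 cs1) (Node L2 cs2).

Definition RW (n : nat) (t : tree) : Prop :=
  perm_eq (labels t) (iota 1 n) /\
  (forall s, In s (nodes t) -> tlab s = [::] -> 2 <= size (tch s)).

Definition white (t : tree) : bool := tlab t != [::].
Definition red (t : tree) : bool := (tlab t == [::]) && all white (tch t).

Fixpoint relabel (f : nat -> nat) (t : tree) : tree :=
  let: Node L cs := t in Node (map f L) (map (relabel f) cs).

(* Grafting [t2] (already relabelled) at the node of [t] containing label x.
   Returns the list of trees replacing [t] among its siblings (needed for
   rule R3, where the node z is replaced by the children of the root r). *)
Fixpoint graft (x : nat) (t2 : tree) (t : tree) : seq tree :=
  let: Node L cs := t in
  if x \in L then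
    if ~~ red t2 then
      [:: Node (rem x L ++ tlab t2) (cs ++ tch t2)]
    else if (0 < size cs) || (1 < size L) then
      [:: Node (rem x L) (rcons cs t2)]
    else (* (R3): z is a leaf with L(z) = {x} *)
      tch t2
  else [:: Node L (flatten (map (graft x t2) cs))].

(* T1 o_x T2 with T1 in RW(m), T2 in RW(n) *)
Definition comp (n x : nat) (t1 t2 : tree) : tree :=
  let t1' := relabel (fun y => if x < y then y + n - 1 else y) t1 in
  let t2' := relabel (fun y => y + x - 1) t2 in
  if red t2' && (tlab t1' == [:: x]) && (size (tch t1') == 0)
    then t2'
  else match graft x t2' t1' with
       | [:: t] => t
       | _ => t1' (* unreachable on the root *)
       end.

Definition A_prec : tree := Node [:: 1] [:: Node [:: 2] [::]].
Definition A_succ : tree := Node [:: 2] [:: Node [:: 1] [::]].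
Definition unit_tree : tree := Node [:: 1] [::].

Inductive gen_prec_succ : nat -> tree -> Prop :=
| gen_unit : gen_prec_succ 1 unit_tree
| gen_prec : gen_prec_succ 2 A_prec
| gen_succ : gen_prec_succ 2 A_succ
| gen_comp m n x t1 t2 :
    gen_prec_succ m t1 -> gen_prec_succ n t2 -> 1 <= x <= m ->
    gen_prec_succ (m + n - 1) (comp n x t1 t2)
| gen_iso n t t' : gen_prec_succ n t -> tiso t t' -> gen_prec_succ n t'.

Definition is_interval (s : seq nat) : Prop :=
  forall i j k, i \in s -> k \in s -> i <= j <= k -> j \in s.

Definition recursively_labelled (t : tree) : Prop :=
  forall s, In s (nodes t) -> is_interval (labels s).

Definition one_label_per_node (t : tree) : Prop :=
  forall s, In s (nodes t) -> size (tlab s) = 1.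

(* Main.v *)
Require Import Defs.
From Stdlib Require Import List Permutation.
From mathcomp Require Import all_boot zify.
Set Implicit Arguments.
Unset Strict Implicit.

Definition tree_ind' (P : tree -> Prop)
  (H : forall L cs, (forall c, In c cs -> P c) -> P (Node L cs)) : forall t, P t :=
  fix F t := match t with Node L cs => H L cs
    ((fix G (cs : seq tree) : forall c, In c cs -> P c :=
       match cs with
       | [::] => fun c (h : In c [::]) => False_ind _ h
       | c0 :: cs' => fun c h => match h with
           | or_introl e => eq_ind _ P (F c0) _ e
           | or_intror h' => G cs' c h' end end) cs) end.

Lemma in_flatten_map (A : Type) (f : A -> seq nat) y cs :
  y \in flatten (map f cs) -> exists c, In c cs /\ y \in f c.
Proof.
elim: cs => [|c cs IH] //=; rewrite mem_cat => /orP [h|h].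
  by exists c; split; [left|].
by have [c' [h1 h2]] := IH h; exists c'; split; [right|].
Qed.

Lemma flatten_map_In (A : Type) (f : A -> seq nat) c cs :
  In c cs -> exists l, perm_eq (flatten (map f cs)) (f c ++ l).
Proof.
move=> h; have [l1 [l2 ->]] := in_split _ _ h; exists (flatten (map f l1) ++ flatten (map f l2)).
rewrite map_cat flatten_cat /= perm_catCA perm_cat2l.
by [].
Qed.


Lemma In_cat (A : Type) (x : A) s1 s2 : In x (s1 ++ s2) <-> In x s1 \/ In x s2.
Proof. elim: s1 => [|a s1 IH] /=; [tauto| rewrite IH; tauto]. Qed.

Lemma In_map (A B : Type) (g : A -> B) y cs :
  In y (map g cs) <-> exists c, g c = y /\ In c cs.
Proof.
elim: cs => [|c cs IH] /=; first by split=> // [[c []]].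
rewrite IH; split.
  by case=> [h|[c' [h1 h2]]]; [exists c; auto | exists c'; auto].
by case=> c' [e [h|h]]; [left; subst | right; exists c'].
Qed.

Lemma In_flat (A B : Type) (g : A -> seq B) u cs :
  In u (flatten (map g cs)) <-> exists c, In c cs /\ In u (g c).
Proof.
elim: cs => [|c cs IH] /=; first by split=> // [[c []]].
rewrite In_cat IH; split.
  by case=> [h|[c' [h1 h2]]]; [exists c; auto | exists c'; auto].
by case=> c' [[<-|h1] h2]; [left | right; exists c'].
Qed.

Lemma nodes_sub u t : In u (nodes t) -> exists l, perm_eq (labels t) (labels u ++ l).
Proof.
elim/tree_ind': t => L cs IH /= [<-|]; first by exists [::]; rewrite cats0.
move=> /In_flat [c [hc hu]].
have [l1 e1] := IH c hc hu.
have [l2 e2] := flatten_map_In labels hc.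
exists (l1 ++ L ++ l2).
apply: (perm_trans (y := L ++ (labels c ++ l2))); first by rewrite perm_cat2l.
apply: (perm_trans (y := L ++ ((labels u ++ l1) ++ l2))); first by rewrite perm_cat2l perm_cat2r.
by rewrite -catA (perm_catCA L) perm_cat2l (perm_catCA L).
Qed.

Lemma nodes_uniq u t : In u (nodes t) -> uniq (labels t) -> uniq (labels u).
Proof.
by move=> /nodes_sub [l e]; rewrite (perm_uniq e) cat_uniq => /andP [].
Qed.

Lemma nodes_mem u t y : In u (nodes t) -> y \in labels u -> y \in labels t.
Proof. by move=> /nodes_sub [l e] h; rewrite (perm_mem e) mem_cat h. Qed.

Lemma nodes_self t : In t (nodes t).
Proof. by case: t => L cs; left. Qed.

Lemma nodes_trans u v t : In u (nodes v) -> In v (nodes t) -> In u (nodes t).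
Proof.
move=> huv; elim/tree_ind': t => L cs IH [e|]; first by rewrite -e in huv.
move=> /In_flat [c [hc hv]]; right; apply/In_flat; exists c; split=> //.
exact: IH.
Qed.

Lemma nodes_child c L cs u : In c cs -> In u (nodes c) -> In u (nodes (Node L cs)).
Proof. by move=> hc hu; right; apply/In_flat; exists c. Qed.

Lemma labels_eq t : labels t = tlab t ++ flatten (map labels (tch t)).
Proof. by case: t. Qed.

Lemma labels_relabel f t : labels (relabel f t) = map f (labels t).
Proof.
elim/tree_ind': t => L cs IH /=; rewrite map_cat; congr (_ ++ _).
rewrite -map_comp map_flatten -map_comp; congr flatten.
elim: cs IH => [|c cs IHc] IH //=; rewrite IH; last by left.
by rewrite IHc // => c' h; apply: IH; right.
Qed.

Lemma tlab_relabel f t : tlab (relabel f t) = map f (tlab t).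
Proof. by case: t. Qed.

Lemma tch_relabel f t : tch (relabel f t) = map (relabel f) (tch t).
Proof. by case: t. Qed.

Lemma nodes_relabel f t u : In u (nodes (relabel f t)) ->
  exists u0, In u0 (nodes t) /\ u = relabel f u0.
Proof.
elim/tree_ind': t => L cs IH /= [<-|]; first by exists (Node L cs); split; [left|].
move=> /In_flat [c' [hc hu]].
move: hc => /In_map [c [ec hc]]; subst c'.
have [u0 [h1 h2]] := IH c hc hu; exists u0; split=> //.
by right; apply/In_flat; exists c.
Qed.

Lemma relabel_ext_in f g t : {in labels t, f =1 g} -> relabel f t = relabel g t.
Proof.
elim/tree_ind': t => L cs IH /= h; congr Node.
  by apply/eq_in_map => y hy; apply: h; rewrite mem_cat hy.
have: forall c, In c cs -> {in labels c, f =1 g}.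
  move=> c hc y hy; apply: h; rewrite mem_cat; apply/orP; right.
  have [l e] := flatten_map_In labels hc.
  by rewrite (perm_mem e) mem_cat hy.
elim: cs IH {h} => [|c cs IHc] IH h //=; congr cons.
  by apply: IH; [left | apply: h; left].
by apply: IHc => [c' hc'|c' hc']; [apply: IH; right | apply: h; right].
Qed.

Lemma relabel_id_in f t : {in labels t, f =1 id} -> relabel f t = t.
Proof.
move=> h; rewrite (relabel_ext_in h); elim/tree_ind': t {h} => L cs IH /=.
rewrite map_id; congr Node; elim: cs IH => [|c cs IHc] IH //=.
by rewrite IH ?IHc //; [move=> c' h; apply: IH; right | left].
Qed.

Lemma relabel_comp f g t : relabel f (relabel g t) = relabel (f \o g) t.
Proof.
elim/tree_ind': t => L cs IH /=; rewrite -map_comp; congr Node.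
elim: cs IH => [|c cs IHc] IH //=.
by rewrite IH ?IHc //; [move=> c' h; apply: IH; right | left].
Qed.

Lemma Permutation_flat (A : Type) (f : A -> seq nat) l1 l2 :
  Permutation l1 l2 -> perm_eq (flatten (map f l1)) (flatten (map f l2)).
Proof.
elim=> //= [x l l' _ h|x y l|l l' l'' _ h1 _ h2].
- by rewrite perm_cat2l.
- by rewrite perm_catCA.
- exact: perm_trans h1 h2.
Qed.

Lemma Forall2_In_r (A B : Type) (R : A -> B -> Prop) l1 l2 y :
  Forall2 R l1 l2 -> In y l2 -> exists x, In x l1 /\ R x y.
Proof.
elim=> // x y' l l' hr _ IH /= [e|h]; first by exists x; subst; auto.
by have [x' [h1 h2]] := IH h; exists x'; auto.
Qed.

Lemma tiso_props a b : tiso a b ->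
  perm_eq (labels a) (labels b) /\
  forall u, In u (nodes b) -> exists v, In v (nodes a) /\
    perm_eq (tlab v) (tlab u) /\ perm_eq (labels v) (labels u).
Proof.
elim/tree_ind': a b => L1 cs1 IH b hab.
inversion hab as [L1' L2 cs1' cs2 cs hL hP hF e1 e2]; subst.
have hcs : perm_eq (flatten (map labels cs1)) (flatten (map labels cs)).
  elim: hF IH {hab} => //= x y l l' hxy _ IHF IH.
  apply: perm_cat; first by have [] := IH x (or_introl erefl) y hxy.
  by apply: IHF => c hc; apply: IH; right.
split.
  rewrite /= (perm_trans (perm_cat hL hcs)) // perm_cat2l perm_sym.
  exact: Permutation_flat.
move=> u /= [<-|].
  exists (Node L1 cs1); split; first by left.
  split=> //=; rewrite (perm_trans (perm_cat hL hcs)) // perm_cat2l perm_sym.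
  exact: Permutation_flat.
move=> /In_flat [c' [hc' hu]].
have [c [hc hcc]] := Forall2_In_r hF (Permutation_in _ hP hc').
have [_ H] := IH c hc c' hcc.
have [v [hv hv']] := H u hu.
by exists v; split=> //; apply: nodes_child hc hv.
Qed.

Lemma tiso_refl t : tiso t t.
Proof.
elim/tree_ind': t => L cs IH; apply: (tiso_node (cs := cs)) => //.
elim: cs IH => [|c cs IHc] IH; constructor; first by apply: IH; left.
by apply: IHc => c' h; apply: IH; right.
Qed.

Lemma interval_perm s s' : perm_eq s s' -> is_interval s -> is_interval s'.
Proof.
move=> e h i j k; rewrite -!(perm_mem e) => hi hk hj; exact: h hi hk hj.
Qed.

Lemma interval_iota a k : is_interval (iota a k).
Proof. move=> i j l; rewrite !mem_iota; lia. Qed.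

Definition P u := size (tlab u) = 1 /\ is_interval (labels u).
Definition good n t := perm_eq (labels t) (iota 1 n) /\ forall u, In u (nodes t) -> P u.

Lemma good_iff n t : good n t <-> RW n t /\ recursively_labelled t /\ one_label_per_node t.
Proof.
split.
  move=> [h1 h2]; split; [split=> // s hs e|split=> s hs]; have [] := h2 s hs => //.
  by rewrite e.
by move=> [[h1 _] [h2 h3]]; split=> // u hu; split; [apply: h3|apply: h2].
Qed.

Lemma good_tiso n a b : good n a -> tiso a b -> good n b.
Proof.
move=> [h1 h2] /tiso_props [e H]; split; first by rewrite perm_sym in e; apply: perm_trans e h1.
move=> u hu; have [v [hv [e1 e2]]] := H u hu; have [p1 p2] := h2 v hv; split.
  by rewrite -(perm_size e1).
exact: interval_perm e2 p2.
Qed.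

Lemma rem_cat (x : nat) s1 s2 :
  rem x (s1 ++ s2) = if x \in s1 then rem x s1 ++ s2 else s1 ++ rem x s2.
Proof.
elim: s1 => [|a s1 IH] //=; rewrite in_cons IH eq_sym.
by case: eqP => //= _; case: (x \in s1).
Qed.

Fixpoint graftW (x : nat) (t2 : tree) (t : tree) : tree :=
  let: Node L cs := t in
  if x \in L then Node (rem x L ++ tlab t2) (cs ++ tch t2)
  else Node L (map (graftW x t2) cs).

Lemma graft_W x t2 t : ~~ red t2 -> graft x t2 t = [:: graftW x t2 t].
Proof.
move=> hr; elim/tree_ind': t => L cs IH /=; case: (x \in L); first by rewrite hr.
congr [:: Node L _]; elim: cs IH => [|c cs IHc] IH //=.
by rewrite IH ?IHc //; [move=> c' h; apply: IH; right | left].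
Qed.

Lemma graftW_notin x t2 t : x \notin labels t -> graftW x t2 t = t.
Proof.
elim/tree_ind': t => L cs IH /=; rewrite mem_cat negb_or => /andP [h1 h2].
rewrite (negbTE h1); congr Node; elim: cs IH h2 => [|c cs IHc] IH //=.
rewrite mem_cat negb_or => /andP [h3 h4].
by rewrite IH ?IHc //; [move=> c' h; apply: IH; right | left].
Qed.

Lemma graftW_notin_map x t2 cs : x \notin flatten (map labels cs) ->
  map (graftW x t2) cs = cs.
Proof.
elim: cs => [|c cs IH] //=; rewrite mem_cat negb_or => /andP [h1 h2].
by rewrite graftW_notin // IH.
Qed.

Lemma labels_graftW x t2 t : uniq (labels t) -> x \in labels t ->
  perm_eq (labels (graftW x t2 t)) (rem x (labels t) ++ labels t2).
Proof.
elim/tree_ind': t => L cs IH /= hu; rewrite rem_cat mem_cat.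
case hL: (x \in L) => /= hx.
  rewrite (labels_eq t2) map_cat flatten_cat -!catA perm_cat2l.
  by rewrite perm_catCA.
rewrite -catA perm_cat2l.
move: hu; rewrite cat_uniq => /and3P [_ _ hu].
elim: cs IH hu hx => [|c cs IHc] IH //= hu.
move: hu; rewrite cat_uniq => /and3P [hu1 hu2 hu3].
rewrite rem_cat mem_cat; case hc: (x \in labels c) => /= hx.
  have hx' : x \notin flatten (map labels cs).
    by apply/negP => h; move/hasP: hu2; apply; exists x.
  rewrite graftW_notin_map //.
  apply: (perm_trans (y := (rem x (labels c) ++ labels t2) ++ flatten (map labels cs))).
    by rewrite perm_cat2r; apply: IH => //; left.
  by rewrite -!catA perm_cat2l perm_catC.
have -> : graftW x t2 c = c by rewrite graftW_notin ?hc.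
rewrite -catA perm_cat2l.
by apply: IHc => // c' h; apply: IH; right.
Qed.

Lemma child_mem c cs y : In c cs -> y \in labels c -> y \in flatten (map labels cs).
Proof. by move=> /(flatten_map_In labels) [l e] h; rewrite (perm_mem e) mem_cat h. Qed.

Lemma nodes_graftW x t2 t u : uniq (labels t) -> In u (nodes (graftW x t2 t)) ->
  (In u (nodes t) /\ x \notin labels u) \/
  (exists s, In s (nodes t) /\ x \in labels s /\ u = graftW x t2 s) \/
  (exists c, In c (tch t2) /\ In u (nodes c)).
Proof.
elim/tree_ind': t => L cs IH hu.
have hself : In (Node L cs) (nodes (Node L cs)) by left.
rewrite [graftW _ _ _]/=; case hL: (x \in L).
  move=> /= [e|]; first by right; left; exists (Node L cs); rewrite /= mem_cat hL -e /=.
  move=> /In_flat [c [/In_cat [hc|hc] hu']]; last by right; right; exists c.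
  left; split; first exact: nodes_child hc hu'.
  apply/negP => hxu; move: hu; rewrite /= cat_uniq => /and3P [_ /hasP hh _].
  by apply: hh; exists x => //; apply: child_mem hc (nodes_mem hu' hxu).
move=> /= [e|].
  case hx: (x \in labels (Node L cs)).
    by right; left; exists (Node L cs); rewrite /= hL.
  have hF : x \notin flatten (map labels cs) by move: hx; rewrite /= mem_cat hL /= => ->.
  rewrite -e graftW_notin_map //; left; split=> //; by rewrite hx.
move=> /In_flat [c' [/In_map [c [<- hc]] hu']].
have huc : uniq (labels c) by apply: nodes_uniq hu; apply: nodes_child hc (nodes_self c).
case: (IH c hc huc hu') => [[h1 h2]|[[s [h1 [h2 h3]]]|h]].
- by left; split=> //; apply: nodes_child hc h1.
- by right; left; exists s; split=> //; apply: nodes_child hc h1.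
- by right; right.
Qed.

Definition f1 n x y := if x < y then y + n - 1 else y.
Definition f2 x y := y + x - 1.

Lemma comp_W n x t1 t2 : ~~ red (relabel (f2 x) t2) ->
  Defs.comp n x t1 t2 = graftW x (relabel (f2 x) t2) (relabel (f1 n x) t1).
Proof.
move=> hr; rewrite /Defs.comp.
have -> : red (relabel (fun y => y + x - 1) t2) = false by apply/negbTE.
by rewrite /= graft_W.
Qed.

Lemma not_red t : size (tlab t) = 1 -> ~~ red t.
Proof. by case: t => [[|a [|b L]] cs]. Qed.

Lemma P_f1 n x u : 1 <= n -> P u -> x \notin labels u -> P (relabel (f1 n x) u).
Proof.
move=> hn [h1 h2] hx; split; first by rewrite tlab_relabel size_map.
rewrite labels_relabel => i j k /mapP [i0 hi ->] /mapP [k0 hk ->].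
rewrite /f1 => hj.
have hxS : ~~ (i0 <= x <= k0) by apply/negP => /(h2 _ _ _ hi hk) h; rewrite h in hx.
move: hj hxS; case: ifP => hi0; case: ifP => hk0 => hj hxS.
- apply/mapP; exists (j - n + 1); first by apply: (h2 _ _ _ hi hk); lia.
  by case: ifP; lia.
- lia.
- lia.
- apply/mapP; exists j; first by apply: (h2 _ _ _ hi hk); lia.
  by case: ifP; lia.
Qed.

Lemma P_f2 x u : 1 <= x -> P u -> P (relabel (f2 x) u).
Proof.
move=> hx [h1 h2]; split; first by rewrite tlab_relabel size_map.
rewrite labels_relabel => i j k /mapP [i0 hi ->] /mapP [k0 hk ->] hj.
apply/mapP; exists (j + 1 - x); first by apply: (h2 _ _ _ hi hk); rewrite /f2 in hj; lia.
by rewrite /f2 in hj *; lia.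
Qed.

Lemma f1_inj n x : 1 <= n -> injective (f1 n x).
Proof. by move=> hn a b; rewrite /f1; case: ifP; case: ifP; lia. Qed.

Lemma f2_inj x : 1 <= x -> injective (f2 x).
Proof. by move=> hx a b; rewrite /f2; lia. Qed.

Lemma interval_graft n x S T2 : 1 <= n -> uniq S -> is_interval S -> x \in S ->
  (forall y, (y \in T2) = (x <= y <= x + n - 1)) ->
  is_interval (rem x (map (f1 n x) S) ++ T2).
Proof.
move=> hn hu h hx hT.
have hu' : uniq (map (f1 n x) S) by rewrite map_inj_uniq //; apply: f1_inj.
have memR y : y \in rem x (map (f1 n x) S) = (y != x) && (y \in map (f1 n x) S).
  by rewrite (mem_rem_uniq _ hu') inE.
move=> i j k; rewrite !mem_cat !memR !hT => hi hk hj.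
case: (boolP (x <= j <= x + n - 1)) => hj2; first by rewrite orbT.
apply/orP; left; case: (ltnP j x) => hjx.
  have : i \in map (f1 n x) S by case/orP: hi => [/andP [] //|]; lia.
  move=> /mapP [i0 hi0 ei]; move: ei; rewrite /f1; case: ifP => hi0x ei; first lia.
  have hjS : j \in S by apply: (h _ _ _ hi0 hx); lia.
  rewrite (_ : j != x) /=; last by apply/eqP; lia.
  apply/mapP; exists j => //; rewrite /f1; case: ifP; lia.
have : k \in map (f1 n x) S by case/orP: hk => [/andP [] //|]; lia.
move=> /mapP [k0 hk0 ek]; move: ek; rewrite /f1; case: ifP => hk0x ek; last lia.
have hjS : j - n + 1 \in S by apply: (h _ _ _ hx hk0); lia.
rewrite (_ : j != x) /=; last by apply/eqP; lia.
apply/mapP; exists (j - n + 1) => //; rewrite /f1; case: ifP; lia.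
Qed.

Lemma tch_nodes c t : In c (tch t) -> In c (nodes t).
Proof. by case: t => L cs /= hc; apply: nodes_child hc (nodes_self c). Qed.

Lemma mem_perm_iota s a k y : perm_eq s (iota a k) -> (y \in s) = (a <= y < a + k).
Proof. by move=> e; rewrite (perm_mem e) mem_iota. Qed.

Lemma good_pos n t : good n t -> 1 <= n.
Proof.
move=> [h1 h2]; have [hs _] := h2 t (nodes_self t).
have := perm_size h1; rewrite size_iota (labels_eq t) size_cat hs; lia.
Qed.

Lemma good_comp m n x t1 t2 : good m t1 -> good n t2 -> 1 <= x <= m ->
  good (m + n - 1) (Defs.comp n x t1 t2).
Proof.
move=> g1 g2 hx; have hn := good_pos g2; move: g1 g2 => [l1 p1] [l2 p2].
have hx1 : 1 <= x by case/andP: hx.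
rewrite comp_W; last first.
  by apply: not_red; rewrite tlab_relabel size_map; have [] := p2 _ (nodes_self t2).
have hu1 : uniq (labels t1) by rewrite (perm_uniq l1) iota_uniq.
have huT1 : uniq (labels (relabel (f1 n x) t1)).
  by rewrite labels_relabel map_inj_uniq //; apply: f1_inj.
have huT2 : uniq (labels (relabel (f2 x) t2)).
  by rewrite labels_relabel map_inj_uniq ?(perm_uniq l2) ?iota_uniq //; apply: f2_inj.
have hxT1 : x \in labels (relabel (f1 n x) t1).
  rewrite labels_relabel; apply/mapP; exists x; last by rewrite /f1 ltnn.
  by rewrite (mem_perm_iota _ l1); lia.
have memT2 y : y \in labels (relabel (f2 x) t2) = (x <= y <= x + n - 1).
  rewrite labels_relabel; apply/mapP/idP => [[y0 h ->]|h].
    by move: h; rewrite (mem_perm_iota _ l2) /f2; lia.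
  by exists (y + 1 - x); [rewrite (mem_perm_iota _ l2)|rewrite /f2]; lia.
have memT1 y : y \in labels (relabel (f1 n x) t1) =
    (1 <= y <= x) || (x + n <= y <= m + n - 1).
  rewrite labels_relabel; apply/mapP/idP => [[y0 h ->]|h].
    by move: h; rewrite (mem_perm_iota _ l1) /f1; case: ifP; lia.
  case: (leqP y x) => hyx.
    by exists y; [rewrite (mem_perm_iota _ l1)|rewrite /f1; case: ifP]; lia.
  by exists (y - n + 1); [rewrite (mem_perm_iota _ l1)|rewrite /f1; case: ifP]; lia.
have memR y : y \in rem x (labels (relabel (f1 n x) t1)) =
    (y != x) && (y \in labels (relabel (f1 n x) t1)).
  by rewrite (mem_rem_uniq _ huT1) inE.
split.
  apply: perm_trans (labels_graftW _ huT1 hxT1) _.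
  apply: uniq_perm; last by move=> y; rewrite mem_cat memR memT1 memT2 mem_iota;
      apply/idP/idP => /=; case: eqP; lia.
    rewrite cat_uniq rem_uniq // huT2 andbT; apply/hasPn => y.
    by rewrite memT2 memR memT1; case: eqP => /=; lia.
  exact: iota_uniq.
move=> u huu; case: (nodes_graftW huT1 huu) => [[h1 h2]|[[s [hs [hxs ->]]]|[c [hc hu]]]].
- have [u0 [hu0 e]] := nodes_relabel h1; subst u; apply: P_f1 => //; first exact: p1.
  apply/negP => hx0; move/negP: h2; apply; rewrite labels_relabel.
  by apply/mapP; exists x => //; rewrite /f1 ltnn.
- have [s0 [hs0 e]] := nodes_relabel hs; subst s; have [hs1 hs2] := p1 _ hs0.
  have hus : uniq (labels (relabel (f1 n x) s0)) by apply: nodes_uniq hs huT1.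
  split.
    move: hxs hs1; case: s0 {hs hs0 hs2 hus} => [[|a [|b L]] cs] //= hxs _.
    case: ifP => hxa.
      rewrite size_cat tlab_relabel size_map.
      have [] := p2 _ (nodes_self t2); move: hxa; rewrite inE => /eqP <-.
      by rewrite eqxx.
    by [].
  apply: (interval_perm (s := rem x (labels (relabel (f1 n x) s0)) ++ labels (relabel (f2 x) t2))).
    by rewrite perm_sym; apply: labels_graftW.
  rewrite labels_relabel; apply: interval_graft => //.
  + by move: hus; rewrite labels_relabel (map_inj_uniq (f1_inj (x:=x) hn)).
  + move: hxs; rewrite labels_relabel => /mapP [y0 hy0].
    by rewrite /f1; case: ifP => hh e; [lia| rewrite e].
- have := nodes_trans hu (tch_nodes hc) => /nodes_relabel [u0 [hu0 ->]].
  by apply: P_f2 => //; apply: p2.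
Qed.

Lemma fwd n t : gen_prec_succ n t -> good n t.
Proof.
elim=> [|||m n' x t1 t2 _ IH1 _ IH2 hx| n' t0 t' _ IH hiso].
- split=> // u /= [<-|[]]; split=> //.
  by apply: (interval_perm (s := iota 1 1)) => //; apply: interval_iota.
- split=> // u /= [<-|[<-|[]]]; split=> //.
    by apply: (interval_perm (s := iota 1 2)) => //; apply: interval_iota.
  by apply: (interval_perm (s := iota 2 1)) => //; apply: interval_iota.
- split=> // u /= [<-|[<-|[]]]; split=> //.
    by apply: (interval_perm (s := iota 1 2)) => //; apply: interval_iota.
  by apply: (interval_perm (s := iota 1 1)) => //; apply: interval_iota.
- exact: good_comp.
- exact: good_tiso hiso.
Qed.

Lemma good_root n t : good n t -> size (tlab t) = 1.
Proof. by move=> [_ h]; have [] := h t (nodes_self t). Qed.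

Lemma good_mem n t y : good n t -> y \in labels t -> 1 <= y <= n.
Proof. by move=> [h _]; rewrite (mem_perm_iota _ h); lia. Qed.

Lemma genL p m C U : gen_prec_succ p C -> gen_prec_succ m U ->
  gen_prec_succ (p + m) (Node (map (addn p) (tlab U)) (C :: map (relabel (addn p)) (tch U))).
Proof.
move=> hC hU; have gC := fwd hC; have gU := fwd hU; have hp := good_pos gC.
have h1 := gen_comp gen_succ hC (isT : 1 <= 1 <= 2); rewrite comp_W in h1; last first.
  by apply: not_red; rewrite tlab_relabel size_map; apply: good_root gC.
rewrite (relabel_id_in (f := f2 1)) in h1; last by move=> y _; rewrite /f2; lia.
have e1 : relabel (f1 p 1) A_succ = Node [:: p.+1] [:: Node [:: 1] [::]].
  by rewrite /= /f1 /=; congr (Node [:: _] _); lia.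
rewrite e1 /= in h1.
have e2 : (1 \in [:: p.+1]) = false by rewrite inE; apply/eqP; lia.
rewrite e2 /= in h1; move: h1; case: C hC gC => LC csC hC gC h1 /=.
have hx2 : 1 <= p.+1 <= 2 + p - 1 by lia.
have h2 := gen_comp h1 hU hx2; rewrite comp_W in h2; last first.
  by apply: not_red; rewrite tlab_relabel size_map; apply: good_root gU.
rewrite (relabel_id_in (f := f1 m p.+1) (t := Node _ _)) in h2; last first.
  move=> y hy; rewrite /f1; case: ifP => // hh.
  have := good_mem gC (y := y); rewrite /= in hy *.
  by move: hy; rewrite in_cons cats0 => /orP [/eqP e|h]; [lia| move=> /(_ h); lia].
move: h2; rewrite /= mem_seq1 eqxx /= tlab_relabel tch_relabel.
have -> : 2 + p - 1 + m - 1 = p + m by lia.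
congr (gen_prec_succ _ (Node _ (_ :: _))).
  by apply: eq_map => y; rewrite /f2; lia.
by apply: eq_map => c; apply: relabel_ext_in => y _; rewrite /f2; lia.
Qed.

Lemma genH p m C U : gen_prec_succ p C -> gen_prec_succ m U ->
  gen_prec_succ (m + p) (Node (tlab U) (relabel (addn m) C :: tch U)).
Proof.
move=> hC hU; have gC := fwd hC; have gU := fwd hU; have hp := good_pos gC.
have h1 := gen_comp gen_prec hC (isT : 1 <= 2 <= 2); rewrite comp_W in h1; last first.
  by apply: not_red; rewrite tlab_relabel size_map; apply: good_root gC.
have e1 : relabel (f1 p 2) A_prec = A_prec by [].
rewrite e1 /= in h1.
have hx2 : 1 <= 1 <= 2 + p - 1 by lia.
move: h1; case hC2: (relabel (f2 2) C) => [L2 cs2] h1.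
have h2 := gen_comp h1 hU hx2; rewrite comp_W in h2; last first.
  by apply: not_red; rewrite tlab_relabel size_map; apply: good_root gU.
rewrite (relabel_id_in (f := f2 1) (t := U)) in h2; last by move=> y _; rewrite /f2; lia.
move: h2; rewrite /= -[Node (map _ L2) _]/(relabel (f1 m 1) (Node L2 cs2)) -hC2 relabel_comp.
have -> : 2 + p - 1 + m - 1 = m + p by lia.
have -> // : relabel (f1 m 1 \o f2 2) C = relabel (addn m) C.
apply: relabel_ext_in => y hy; have := good_mem gC hy.
by rewrite /= /f1 /f2; case: ifP; lia.
Qed.

Lemma perm_iota_min S a : uniq S -> is_interval S -> a \in S ->
  (forall y, y \in S -> a <= y) -> perm_eq S (iota a (size S)).
Proof.
move=> hu hI ha hmin; apply: uniq_perm => //; first exact: iota_uniq.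
suff hsub : {subset S <= iota a (size S)}.
  by have [] := uniq_min_size hu hsub; rewrite ?size_iota.
move=> y hy; rewrite mem_iota; have := hmin _ hy => hay.
have hs : {subset iota a (y - a).+1 <= S}.
  by move=> z; rewrite mem_iota => hz; apply: (hI a z y) => //; lia.
have := uniq_leq_size (iota_uniq a (y - a).+1) hs; rewrite size_iota; lia.
Qed.

Lemma perm_iota_max S b : uniq S -> is_interval S -> b \in S ->
  (forall y, y \in S -> y <= b) -> perm_eq S (iota (b.+1 - size S) (size S)).
Proof.
move=> hu hI hb hmax; apply: uniq_perm => //; first exact: iota_uniq.
suff hsub : {subset S <= iota (b.+1 - size S) (size S)}.
  by have [] := uniq_min_size hu hsub; rewrite ?size_iota.
move=> y hy; rewrite mem_iota; have := hmax _ hy => hyb.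
have hs : {subset iota y (b - y).+1 <= S}.
  by move=> z; rewrite mem_iota => hz; apply: (hI y z b) => //; lia.
have := uniq_leq_size (iota_uniq y (b - y).+1) hs; rewrite size_iota; lia.
Qed.

Lemma P_sub d u : P u -> (forall y, y \in labels u -> d <= y) ->
  P (relabel (subn^~ d) u).
Proof.
move=> [h1 h2] hd; split; first by rewrite tlab_relabel size_map.
rewrite labels_relabel => i j k /mapP [i0 hi ->] /mapP [k0 hk ->] hj.
have := hd _ hi; have := hd _ hk => ? ?.
apply/mapP; exists (j + d); last lia.
by apply: (h2 _ _ _ hi hk); lia.
Qed.

Lemma shift_good d k t : perm_eq (labels t) (iota d.+1 k) ->
  (forall u, In u (nodes t) -> P u) -> good k (relabel (subn^~ d) t).
Proof.
move=> hl hP; split.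
  rewrite labels_relabel; apply: perm_trans (perm_map _ hl) _.
  rewrite -addn1 iotaDl -map_comp.
  by rewrite (eq_map (g := id)) ?map_id // => y /=; lia.
move=> u /nodes_relabel [u0 [hu0 ->]]; apply: P_sub; first exact: hP.
by move=> y hy; have := nodes_mem hu0 hy; rewrite (mem_perm_iota _ hl); lia.
Qed.

Lemma In_split_cat (A : Type) (c : A) cs : In c cs ->
  exists l1 l2, cs = l1 ++ c :: l2.
Proof.
elim: cs => [|a cs IH] //= [->|h]; first by exists [::], cs.
by have [l1 [l2 ->]] := IH h; exists (a :: l1), l2.
Qed.

Lemma iso_move k c l1 l2 :
  tiso (Node [:: k] (c :: l1 ++ l2)) (Node [:: k] (l1 ++ c :: l2)).
Proof.
apply: (tiso_node (cs := c :: l1 ++ l2)) => //.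
  by apply: Permutation_sym; apply: Permutation_middle.
elim: (c :: l1 ++ l2) => [|a l IH]; constructor => //; exact: tiso_refl.
Qed.

Lemma decomp k cs c n : good n (Node [:: k] cs) -> In c cs -> exists l1 l2,
  cs = l1 ++ c :: l2 /\
  perm_eq (labels c ++ labels (Node [:: k] (l1 ++ l2))) (iota 1 n) /\
  (forall u, In u (nodes (Node [:: k] (l1 ++ l2))) ->
     u = Node [:: k] (l1 ++ l2) \/ In u (nodes (Node [:: k] cs))) /\
  (forall u, In u (nodes c) -> In u (nodes (Node [:: k] cs))).
Proof.
move=> [hl hP] hc; have [l1 [l2 e]] := In_split_cat hc; exists l1, l2; split=> //.
split.
  apply: perm_trans hl; rewrite e /= !map_cat !flatten_cat /=.
  by rewrite perm_sym -cat1s catA perm_catCA -catA cat1s.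
split; last by move=> u hu; apply: nodes_child hc hu.
move=> u /= [<-|]; first by left.
move=> /In_flat [d [/In_cat hd hu]]; right; apply: nodes_child hu.
by rewrite e; apply/In_cat; case: hd; [left|right; right].
Qed.

Lemma map_id_In (f : tree -> tree) l : (forall d, In d l -> f d = d) -> map f l = l.
Proof.
elim: l => [|a l IH] //= h; rewrite h; last by left.
by rewrite IH // => d hd; apply: h; right.
Qed.

Lemma rev N : forall n t, n <= N -> good n t -> gen_prec_succ n t.
Proof.
elim: N => [|N IHN] n t hn g; first by have := good_pos g; lia.
have hr := good_root g.
case: t g hr => L cs g hr.
case: L g hr => [|k [|? ?]] //= g _.
have [hl hP] := g.
have hu : uniq (labels (Node [:: k] cs)) by rewrite (perm_uniq hl) iota_uniq.
have hk := good_mem g (y := k) (mem_head _ _).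
case: cs g hl hP hu => [|c0 cs0] g hl hP hu.
  have := perm_size hl; rewrite size_iota /= => hn1; subst n.
  have -> : k = 1 by lia.
  exact: gen_unit.
set cs := c0 :: cs0.
have hchild y : y \in labels (Node [:: k] cs) -> y != k ->
    exists c, In c cs /\ y \in labels c.
  rewrite /= in_cons => /orP [/eqP -> |]; first by rewrite eqxx.
  by move=> hy _; have [c [hc hyc]] := in_flatten_map (cs := cs) (f := labels) hy; exists c.
have hsz : size (labels (Node [:: k] cs)) = n by rewrite (perm_size hl) size_iota.
case: (eqVneq k 1) => hk1.
- (* k = 1 : split off the child containing n *)
  subst k.
  have hc0 : In c0 (nodes (Node [:: 1] cs)) by apply: nodes_child (nodes_self c0); left.
  have hn2 : 2 <= n.
    have [hs0 _] := hP _ hc0; move: hsz; rewrite /= size_cat (labels_eq c0) size_cat hs0; lia.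
  have [c [hc hnc0]] : exists c, In c cs /\ n \in labels c.
    by apply: hchild; [rewrite (mem_perm_iota _ hl)|apply/eqP]; lia.
  have [l1 [l2 [e [hperm [hnR hnc]]]]] := decomp g hc.
  have hcn : In c (nodes (Node [:: 1] cs)) := hnc c (nodes_self c).
  set p := size (labels c).
  have hlc : perm_eq (labels c) (iota (n.+1 - p) p).
    apply: perm_iota_max => //; first exact: nodes_uniq hcn hu.
      by have [] := hP c hcn.
    by move=> y hy; have := good_mem g (nodes_mem hcn hy); lia.
  set R := Node [:: 1] (l1 ++ l2).
  have hs2 : p + size (labels R) = n by have := perm_size hperm; rewrite size_cat size_iota.
  have hR1 : 1 \in labels R by exact: mem_head.
  have hRs : 0 < size (labels R) by case: (labels R) hR1.
  have hp : 0 < p by rewrite /p; case: (labels c) hnc0.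
  clearbody p.
  have e2 : iota 1 ((n - p) + p) = iota 1 (n - p) ++ iota (1 + (n - p)) p := iotaD _ _ _.
  rewrite subnK ?add1n in e2; last lia.
  have e3 : n.+1 - p = (n - p).+1 by lia.
  rewrite e3 in hlc.
  have hlR : perm_eq (labels R) (iota 1 (n - p)).
    rewrite -(perm_cat2r (iota (n - p).+1 p)) -e2.
    apply: perm_trans hperm; rewrite perm_catC; apply: perm_cat => //.
    by rewrite perm_sym.
  have hPR u : In u (nodes R) -> P u.
    case/hnR => [->|]; last exact: hP.
    split=> //; have hh : perm_eq (iota 1 (n - p)) (labels R) by rewrite perm_sym.
    exact: (interval_perm hh (@interval_iota 1 (n - p))).
  have gR : good (n - p) R by split.
  have gC := shift_good hlc (fun u hu => hP u (hnc u hu)).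
  have hnp : n - p <= N by lia.
  have hpN : p <= N by lia.
  have := genH (IHN _ _ hpN gC) (IHN _ _ hnp gR).
  rewrite relabel_comp relabel_id_in; last first.
    by move=> y hy /=; move: hy; rewrite (mem_perm_iota _ hlc); lia.
  rewrite subnK; last lia.
  move=> h; apply: gen_iso h _; rewrite /R /cs e /=; exact: iso_move.
- (* k <> 1 : split off the child containing 1 *)
  have [c [hc h1c]] : exists c, In c cs /\ 1 \in labels c.
    by apply: hchild; [rewrite (mem_perm_iota _ hl)|rewrite eq_sym]; lia.
  have [l1 [l2 [e [hperm [hnR hnc]]]]] := decomp g hc.
  have hcn : In c (nodes (Node [:: k] cs)) := hnc c (nodes_self c).
  set p := size (labels c).
  have hlc : perm_eq (labels c) (iota 1 p).
    apply: perm_iota_min => //; first exact: nodes_uniq hcn hu.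
      by have [] := hP c hcn.
    by move=> y hy; have := good_mem g (nodes_mem hcn hy); lia.
  set R := Node [:: k] (l1 ++ l2).
  have hs2 : p + size (labels R) = n by have := perm_size hperm; rewrite size_cat size_iota.
  have hRk : k \in labels R by exact: mem_head.
  have hRs : 0 < size (labels R) by case: (labels R) hRk.
  have hp : 0 < p by rewrite /p; case: (labels c) h1c.
  clearbody p.
  have e2 : iota 1 (p + (n - p)) = iota 1 p ++ iota (1 + p) (n - p) := iotaD _ _ _.
  rewrite subnKC ?add1n in e2; last lia.
  have hlR : perm_eq (labels R) (iota p.+1 (n - p)).
    rewrite -(perm_cat2l (iota 1 p)) -e2.
    apply: perm_trans hperm; apply: perm_cat => //.
    by rewrite perm_sym.
  have hPR u : In u (nodes R) -> P u.
    case/hnR => [->|]; last exact: hP.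
    split=> //; have hh : perm_eq (iota p.+1 (n - p)) (labels R) by rewrite perm_sym.
    exact: (interval_perm hh (@interval_iota p.+1 (n - p))).
  have gU := shift_good hlR hPR.
  have gc : good p c by split=> // u hu'; apply: hP; apply: hnc.
  have hnp : n - p <= N by lia.
  have hpN : p <= N by lia.
  have := genL (IHN _ _ hpN gc) (IHN _ _ hnp gU).
  have hkp : p < k by move: hRk; rewrite (mem_perm_iota _ hlR); lia.
  rewrite subnKC; last lia.
  rewrite [tlab _]/= [tch _]/= -map_comp map_id_In; last first.
    move=> d hd /=; rewrite relabel_comp relabel_id_in // => y hy /=.
    have : y \in labels R.
      by rewrite /R /= in_cons; apply/orP; right; apply: child_mem hd hy.
    rewrite (mem_perm_iota _ hlR); lia.
  rewrite /= (_ : p + (k - p) = k); last lia.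
  move=> h; apply: gen_iso h _; rewrite /cs e; exact: iso_move.
Qed.

Theorem mainTheorem11 (n : nat) (t : tree) :
  gen_prec_succ n t <->
  (RW n t /\ recursively_labelled t /\ one_label_per_node t).
Proof.
split; first by move/fwd/good_iff.
by move/good_iff; apply: (@rev n n t (leqnn n)).
Qed.
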